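(* Let $x$ be an infinite word and let $k,\lambda\in\mathbb{N}=\{1,2,3,\dots\}$ be such that $$\underline{d}(\mathrm{AP}(x,k,\lambda)) < \left(1+\left\lfloor\frac{k^2-k}{\lambda^2+\lambda}\right\rfloor\right)^{-1}.$$ Then for every positive integer $\ell$ there is a word $u$ with $|u|\le (k-1)\left\lfloor\frac{k^2-k}{\lambda^2+\lambda}\right\rfloor$ such that $u^\ell$ is a factor of $x$.
   Context: A factor is a contiguous subword; $|u|$ is the length of $u$ and $u^\ell$ is $\ell$ concatenated copies of $u$. A $(k,\lambda)$-anti-power is a word $w=w_1\cdots w_k$ with $|w_1|=\cdots=|w_k|$ such that $|\{i: w_i=w_j\}|\le\lambda$ for each $j\in\{1,\dots,k\}$. $\mathrm{AP}(x,k,\lambda)$ is the set of $m\in\mathbb{N}$ such that the prefix of $x$ of length $km$ is a $(k,\lambda)$-anti-power. For $S\subseteq\mathbb{N}$, the lower density is $\underline{d}(S)=\liminf_{n\to\infty}|S\cap\{1,\dots,n\}|/n$. *)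

(* Defs.v *)
From HB Require Import structures.
From mathcomp Require Import all_boot all_order all_algebra.
From mathcomp Require Import all_classical all_reals all_analysis.
Set Implicit Arguments. Unset Strict Implicit. Unset Printing Implicit Defensive.
Import Order.TTheory GRing.Theory Num.Theory.

(* Infinite words over an alphabet T (any type with decidable equality)
   are maps nat -> T, indexed from 0:  x = x 0 x 1 x 2 ... *)

Definition block (T : eqType) (x : nat -> T) (m i : nat) : seq T :=
  mkseq (fun t => x (i * m + t)) m.

(* m \in AP(x,k,lambda): m >= 1 and the prefix of x of length k*m,
   cut into w_1 ... w_k with |w_i| = m, satisfies
   |{i : w_i = w_j}| <= lambda for every j. *)
Definition inAP (T : eqType) (x : nat -> T) (k lambda m : nat) : bool :=
  (0 < m) &&
  [forall j : 'I_k,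
     count (fun i => block x m i == block x m j) (iota 0 k) <= lambda].

Definition count_upto (S : pred nat) (n : nat) : nat :=
  \sum_(1 <= m < n.+1) (S m : nat).

(* lower density: liminf_{n -> oo} |S \cap {1..n}| / n
   (sequence reindexed by n.+1 to avoid n = 0; it lies in [0,1]) *)
Definition lower_density (R : realType) (S : pred nat) : R :=
  limn_inf (fun n : nat => ((count_upto S n.+1)%:R / (n.+1)%:R : R)%R).

Definition wpow (T : Type) (u : seq T) (l : nat) : seq T := flatten (nseq l u).

Definition factor_of (T : eqType) (w : seq T) (x : nat -> T) : Prop :=
  exists p : nat, mkseq (fun t => x (p + t)) (size w) = w.

(* Main.v *)
Require Import Defs.
From HB Require Import structures.
From mathcomp Require Import all_boot all_order all_algebra.
From mathcomp Require Import all_classical all_reals all_analysis.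
From mathcomp Require Import zify lra.
Import Order.TTheory GRing.Theory Num.Theory.

Lemma card_set_count k (P : pred nat) : #|[set i : 'I_k | P i]| = count P (iota 0 k).
Proof.
rewrite -sum1_count (_ : iota 0 k = index_iota 0 k); last by rewrite /index_iota subn0.
by rewrite big_mkord sum1_card cardsE.
Qed.

Lemma wpow_mk (T : Type) (f : nat -> T) q l :
  flatten (nseq l (mkseq f q)) = mkseq (fun t => f (t %% q)) (l * q).
Proof.
elim: l => [|l IH] //=.
rewrite IH mulSn /mkseq iotaD map_cat; congr (_ ++ _).
  apply/eq_in_map => t; rewrite mem_iota add0n => /andP[_ ht]; by rewrite modn_small.
rewrite add0n -(addn0 q) iotaDl -map_comp addn0; apply: eq_map => t /=.
by rewrite addnC modnDr.
Qed.

Lemma period_factor (T : eqType) (x : nat -> T) P0 q L l : (0 < q)%N ->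
  (l * q <= L + q)%N -> (forall t, (t < L)%N -> x (P0 + t) = x (P0 + t + q)) ->
  factor_of (wpow (mkseq (fun t => x (P0 + t)) q) l) x.
Proof.
move=> q0 hlq hp; exists P0.
have hmod : forall t, (t < L + q)%N -> x (P0 + t) = x (P0 + t %% q).
  elim/ltn_ind => t IH ht.
  case: (ltnP t q) => htq; first by rewrite modn_small.
  have -> : t = (t - q) + q by rewrite subnK.
  rewrite modnDr addnA -hp; last by lia.
  apply: IH; lia.
rewrite /wpow wpow_mk size_mkseq /mkseq; apply/eq_in_map => t.
rewrite mem_iota add0n => /andP[_ ht] /=; apply: hmod; lia.
Qed.

Lemma block_eq (T : eqType) (x : nat -> T) m a b t : block x m a = block x m b ->
  (t < m)%N -> x (a * m + t) = x (b * m + t).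
Proof.
move=> e ht; have := congr1 (fun s => nth (x 0%N) s t) e.
by rewrite /block !nth_mkseq.
Qed.

Lemma two_periods (T : eqType) (x : nat -> T) m1 s a d t :
  (forall t, (t < m1)%N -> x (a * m1 + t) = x ((a + d) * m1 + t)) ->
  (forall t, (t < m1 + s)%N -> x (a * (m1 + s) + t) = x ((a + d) * (m1 + s) + t)) ->
  (t + a * s < m1)%N ->
  x (a * (m1 + s) + d * m1 + t) = x (a * (m1 + s) + d * m1 + t + d * s).
Proof.
move=> h1 h2 ht.
have e1 := h1 (a * s + t) ltac:(lia).
have e2 := h2 t ltac:(lia).
have E1 : a * (m1 + s) + d * m1 + t = (a + d) * m1 + (a * s + t) by nia.
have E2 : a * (m1 + s) + d * m1 + t + d * s = (a + d) * (m1 + s) + t by nia.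
have E3 : a * m1 + (a * s + t) = a * (m1 + s) + t by nia.
by rewrite E2 E1 -e1 -e2 E3.
Qed.

Lemma pigeon (U : finType) (A : nat -> {set U}) (D : {set U}) n :
  (forall s, (s < n)%N -> A s \subset D) -> (#|D| < \sum_(s < n) #|A s|)%N ->
  exists s1 s2, [/\ (s1 < s2)%N, (s2 < n)%N & (0 < #|A s1 :&: A s2|)%N].
Proof.
move=> hsub hlt.
case: (boolP [exists s1 : 'I_n, exists s2 : 'I_n, (s1 < s2)%N && ((0 < #|A s1 :&: A s2|)%N)]).
  move=> /existsP[s1 /existsP[s2 /andP[h1 h2]]]; exists s1, s2; split => //.
move=> hn; exfalso.
have disj : forall s1 s2, (s1 < s2)%N -> (s2 < n)%N -> #|A s1 :&: A s2| = 0.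
  move=> s1 s2 h12 h2; apply/eqP; rewrite -leqn0 leqNgt; apply: contraNN hn => hne.
  apply/existsP; exists (Ordinal (ltn_trans h12 h2)); apply/existsP; exists (Ordinal h2).
  by rewrite /= h12.
have card_U : forall j, (j <= n)%N -> #|\bigcup_(s < j) A s| = \sum_(s < j) #|A s|.
  elim => [|j IH] hj; first by rewrite !big_ord0 cards0.
  rewrite !big_ord_recr /= cardsU IH ?(ltnW hj) //.
  suff -> : #|(\bigcup_(i < j) A i) :&: A j| = 0 by rewrite subn0.
  apply/eqP; rewrite cards_eq0 -finset.subset0; apply/fintype.subsetP => y /setIP[/bigcupP[i _ hi] hj'].
  have := disj i j (ltn_ord i) hj; move/eqP; rewrite cards_eq0 => /eqP e.
  by rewrite -e; apply/setIP.
have : (#|\bigcup_(s < n) A s| <= #|D|)%N.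
  apply: subset_leq_card; apply/bigcupsP => i _; exact: hsub.
by rewrite card_U // leqNgt hlt.
Qed.


Lemma off_card k : (#|[set p : 'I_k * 'I_k | p.1 != p.2]| <= k ^ 2 - k)%N.
Proof.
have hC := cardsC [set p : 'I_k * 'I_k | p.1 == p.2].
have -> : [set p : 'I_k * 'I_k | p.1 != p.2] = ~: [set p : 'I_k * 'I_k | p.1 == p.2].
  by apply/setP => p; rewrite !inE.
have hD : (k <= #|[set p : 'I_k * 'I_k | p.1 == p.2]|)%N.
  have hs : (#|(fun a : 'I_k => (a, a)) @: [set: 'I_k]| <= #|[set p : 'I_k * 'I_k | p.1 == p.2]|)%N.
    apply: subset_leq_card; apply/fintype.subsetP => p /imsetP[a _ ->]; by rewrite inE.
  by rewrite card_imset ?cardsT ?card_ord in hs => // a b [].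
move: hC; rewrite card_prod card_ord => hC; lia.
Qed.

Lemma pairs_card k (E : {set 'I_k}) (Pr : {set 'I_k * 'I_k}) :
  (forall a b, a \in E -> b \in E -> a != b -> (a, b) \in Pr) ->
  (#|E| ^ 2 - #|E| <= #|Pr|)%N.
Proof.
move=> hP.
have hID := cardsID [set p : 'I_k * 'I_k | p.1 == p.2] (finset.setX E E).
rewrite cardsX in hID.
have h1 : (#|finset.setX E E :&: [set p : 'I_k * 'I_k | p.1 == p.2]| <= #|E|)%N.
  apply: (leq_trans _ (leq_imset_card (fun a : 'I_k => (a, a)) E)).
  apply: subset_leq_card; apply/fintype.subsetP => -[a b].
  rewrite !inE /= => /andP[/andP[ha hb] /eqP eab]; subst b.
  by apply/imsetP; exists a.
have h2 : (#|finset.setX E E :\: [set p : 'I_k * 'I_k | p.1 == p.2]| <= #|Pr|)%N.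
  apply: subset_leq_card; apply/fintype.subsetP => -[a b].
  rewrite !inE /= => /andP[hab /andP[ha hb]]; exact: hP.
have hID2 : #|finset.setX E E :&: [set p : 'I_k * 'I_k | p.1 == p.2]| + #|finset.setX E E :\: [set p : 'I_k * 'I_k | p.1 == p.2]| = #|E| * #|E| := hID.
move: hID2 h1 h2; rewrite expnS expn1; lia.
Qed.

Lemma notAP_set (T : eqType) (x : nat -> T) k lambda m : (0 < m)%N ->
  ~~ inAP x k lambda m -> exists E : {set 'I_k}, (lambda < #|E|)%N /\
  forall a b, a \in E -> b \in E -> block x m a = block x m b.
Proof.
move=> hm; rewrite /inAP hm /= negb_forall => /existsP[j]; rewrite -ltnNge => hj.
exists [set i : 'I_k | block x m i == block x m j]; split.
  by rewrite (card_set_count k (fun i => block x m i == block x m j)).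
by move=> a b; rewrite !inE => /eqP -> /eqP ->.
Qed.


Lemma window (T : eqType) (x : nat -> T) k lambda N m l :
  (k ^ 2 - k < N.+1 * (lambda ^ 2 + lambda))%N -> (0 < m)%N ->
  (l.+1 * (k * N) <= m)%N ->
  (forall s, (s <= N)%N -> ~~ inAP x k lambda (m + s)) ->
  exists u : seq T, (0 < size u)%N /\ (size u <= (k - 1) * N)%N /\
    factor_of (wpow u l) x.
Proof.
move=> hN hm hml hw.
pose Pr s := [set p : 'I_k * 'I_k | (p.1 != p.2) && (block x (m + s) p.1 == block x (m + s) p.2)].
have hPr : forall s, (s <= N)%N -> (lambda ^ 2 + lambda <= #|Pr s|)%N.
  move=> s hs.
  have [E [hE hEb]] := @notAP_set _ x k lambda (m + s) (ltn_addr s hm) (hw s hs).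
  have := @pairs_card k E (Pr s).
  have H : (forall a b, a \in E -> b \in E -> a != b -> (a, b) \in Pr s).
    by move=> a b ha hb hab; rewrite inE /= hab (hEb a b ha hb) eqxx.
  move=> /(_ H) hc; apply: leq_trans hc.
  rewrite -!mulnn; nia.
have hsum : (N.+1 * (lambda ^ 2 + lambda) <= \sum_(s < N.+1) #|Pr s|)%N.
  have -> : (N.+1 * (lambda ^ 2 + lambda) = \sum_(s < N.+1) (lambda ^ 2 + lambda))%N.
    by rewrite sum_nat_const card_ord.
  apply: leq_sum => s _; apply: hPr; rewrite -ltnS; exact: ltn_ord.
have [s1 [s2 [h12 hs2 hI]]] := @pigeon _ Pr [set p : 'I_k * 'I_k | p.1 != p.2] N.+1
  ltac:(move=> s _; apply/fintype.subsetP => p; rewrite !inE => /andP[]//)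
  ltac:(apply: leq_trans hsum; apply: leq_trans hN; apply: leq_ltn_trans (off_card k) _; done).
move/card_gt0P: hI => [[a' b']]; rewrite !inE /= => /andP[/andP[hab' /eqP e1'] /andP[_ /eqP e2']].
have [a [b [hab [hbk [e1 e2]]]]] : exists a b : nat, [/\ (a < b)%N, (b < k)%N,
   block x (m + s1) a = block x (m + s1) b & block x (m + s2) a = block x (m + s2) b].
  case: (ltngtP a' b') => h.
  - by exists a', b'; split.
  - by exists b', a'; split.
  - by move/val_inj: h => h; rewrite h eqxx in hab'.
set m1 := m + s1.
set s := s2 - s1.
have hm2 : m + s2 = m1 + s by rewrite /m1 /s; lia.
set d := b - a.
have hb : b = a + d by rewrite /d; lia.
have h1 : forall t, (t < m1)%N -> x (a * m1 + t) = x ((a + d) * m1 + t).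
  by move=> t ht; rewrite -hb; apply: block_eq.
have h2 : forall t, (t < m1 + s)%N -> x (a * (m1 + s) + t) = x ((a + d) * (m1 + s) + t).
  move=> t ht; rewrite -hb -hm2; apply: block_eq => //; by rewrite hm2.
set P0 := a * (m1 + s) + d * m1.
set q := d * s.
exists (mkseq (fun t => x (P0 + t)) q).
have hd0 : (0 < d)%N by rewrite /d; lia.
have hs0 : (0 < s)%N by rewrite /s; lia.
have hdk : (d <= k - 1)%N by rewrite /d; lia.
have hsN : (s <= N)%N by rewrite /s; lia.
have hq : (q <= (k - 1) * N)%N by apply: leq_mul.
rewrite size_mkseq; split; first by rewrite muln_gt0 hd0 hs0.
split => //.
have hqk : (q <= k * N)%N by apply: leq_trans hq _; apply: leq_mul => //; lia.
have has : (a * s <= k * N)%N by apply: leq_mul => //; lia.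
have hlq : (l * q <= l * (k * N))%N by apply: leq_mul.
move: hml; rewrite mulSn => hml.
apply: (@period_factor _ x P0 q (m1 - a * s) l); first by rewrite muln_gt0 hd0 hs0.
  rewrite /m1; lia.
move=> t ht; rewrite /P0 /q; apply: two_periods => //; lia.
Qed.


Lemma liminf_ge (R : realType) (u : nat -> R) (c : R) (n0 : nat) :
  (forall n, (0 <= u n <= 1)%R) -> (forall n, (n0 <= n)%N -> (c <= u n)%R) ->
  (c <= limn_inf u)%R.
Proof.
move=> u01 hc.
have bu : bounded_fun u.
  exists 1%R; split => // M hM n _ /=.
  have /andP[h0 h1] := u01 n.
  rewrite ger0_norm //; apply: le_trans h1 _; exact: ltW.
rewrite limn_infE //.
apply: (@le_trans _ _ (infs u n0)).
  rewrite /infs /=; apply: lb_le_inf; first by exists (u n0); exists n0 => //=.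
  move=> _ [m /= hm <-]; exact: hc.
apply: ub_le_sup; last by exists n0.
exact: bounded_fun_has_ubound_infs.
Qed.

Lemma count_upS (S : pred nat) n : count_upto S n.+1 = count_upto S n + S n.+1.
Proof. by rewrite /count_upto big_nat_recr. Qed.

Lemma count_up_mono (S : pred nat) a b : (a <= b)%N -> (count_upto S a <= count_upto S b)%N.
Proof.
move=> hab; rewrite -(subnK hab); elim: (b - a) => [|j IH] //=.
rewrite addSn count_upS; exact: leq_trans IH (leq_addr _ _).
Qed.

Lemma count_up_le (S : pred nat) n : (count_upto S n <= n)%N.
Proof.
elim: n => [|n IH]; first by rewrite /count_upto big_geq.
rewrite count_upS; case: (S n.+1) => /=; lia.
Qed.

Lemma count_lb (S : pred nat) M N :
  (forall m, (M <= m)%N -> exists s, (s <= N)%N /\ S (m + s)) ->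
  forall n, (n <= N.+1 * count_upto S n + (M + N))%N.
Proof.
move=> H; elim/ltn_ind => n IH.
case: (leqP n (M + N)) => hn; first lia.
set n' := n - N.+1.
have [s [hs hS]] := H n'.+1 ltac:(rewrite /n'; lia).
have h1 : (count_upto S n' < count_upto S n)%N.
  have e : (n'.+1 + s = (n' + s).+1)%N by lia.
  apply: (@leq_trans (count_upto S (n'.+1 + s))); last by apply: count_up_mono; rewrite /n'; lia.
  rewrite e count_upS -e hS addn1 ltnS; apply: count_up_mono; lia.
have h2 := IH n' ltac:(rewrite /n'; lia).
have h3 : (N.+1 * (count_upto S n').+1 <= N.+1 * count_upto S n)%N by apply: leq_mul.
move: h2 h3; rewrite /n' mulnS; lia.
Qed.


Theorem corollary3p5 (R : realType) (T : eqType) (x : nat -> T)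
    (k lambda : nat) (hk : (0 < k)%N) (hl : (0 < lambda)%N) :
  (lower_density R (inAP x k lambda) <
     ((1 + (k ^ 2 - k) %/ (lambda ^ 2 + lambda))%N%:R)^-1)%R ->
  forall l : nat, (0 < l)%N ->
    exists u : seq T,
      (0 < size u)%N /\
      (size u <= (k - 1) * ((k ^ 2 - k) %/ (lambda ^ 2 + lambda)))%N /\
      factor_of (wpow u l) x.
Proof.
move=> hd l hl0.
set N := (k ^ 2 - k) %/ (lambda ^ 2 + lambda) in hd *.
have hN : (k ^ 2 - k < N.+1 * (lambda ^ 2 + lambda))%N.
  by apply: ltn_ceil; rewrite addn_gt0 hl orbT.
set S := inAP x k lambda in hd *.
have key : forall M, exists m, (M <= m)%N /\ forall s, (s <= N)%N -> ~~ S (m + s).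
  move=> M; case: (pselect (exists m, (M <= m)%N /\ forall s, (s <= N)%N -> ~~ S (m + s))) => // nW.
  exfalso.
  have H : forall m, (M <= m)%N -> exists s, (s <= N)%N /\ S (m + s).
    move=> m hm; case: (pselect (exists s, (s <= N)%N /\ S (m + s))) => // ns; exfalso.
    apply: nW; exists m; split => // s hs; apply/negP => hS; by apply: ns; exists s; split.
  have cl := @count_lb S M N H.
  move: hd; rewrite /lower_density.
  set u := (fun n : nat => _).
  set dn := limn_inf u.
  set b : R := (((1 + N)%N)%:R)%R.
  have hb1 : (1 <= b)%R by rewrite /b ler1n addn_gt0.
  have hb0 : (0 < b)%R by apply: lt_le_trans hb1.
  move=> hd.
  set dl := (b^-1 - dn)%R.
  have hdl : (0 < dl)%R by rewrite /dl subr_gt0.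
  set K : R := (((M + N)%N)%:R)%R.
  have hK0 : (0 <= K)%R by [].
  have hx0 : (0 <= 2 * K / dl)%R by rewrite divr_ge0 // ?mulr_ge0 // ltW.
  set n0 := Num.Def.archi_bound (2 * K / dl)%R.
  have hn0 := archi_boundP hx0; rewrite -/n0 in hn0.
  have hlim : (b^-1 - dl / 2 <= dn)%R.
    apply: (@liminf_ge R u _ n0).
      move=> n; rewrite /u divr_ge0 //=.
      by rewrite ler_pdivrMr ?ltr0n // mul1r ler_nat count_up_le.
    move=> n hn; rewrite /u /=.
    set C : R := ((count_upto S n.+1)%:R)%R.
    set a : R := ((n.+1)%:R)%R.
    have ha0 : (0 < a)%R by rewrite /a ltr0n.
    have hcl : (a <= b * C + K)%R.
      by rewrite /a /b /C /K -natrM -natrD ler_nat add1n; exact: cl.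
    have hna : (n0%:R <= a)%R by rewrite /a ler_nat; lia.
    have hKa : (2 * K <= a * dl)%R.
      rewrite -ler_pdivrMr //; apply: le_trans (ltW hn0) hna.
    have hib : (b^-1 * a <= C + K)%R.
      have hib0 : (0 <= b^-1)%R by rewrite invr_ge0 ltW.
      have := ler_wpM2l hib0 hcl.
      rewrite mulrDr mulrA mulVf ?gt_eqF // mul1r => h.
      apply: le_trans h _; rewrite lerD2l; apply: ler_piMl => //.
      by rewrite invr_le1 // unitfE gt_eqF.
    rewrite ler_pdivlMr //; nra.
  move: hlim; rewrite /dl; lra.
have [m [hm hw]] := key (l.+1 * (k * N)).+1.
apply: (@window T x k lambda N m l hN _ _ hw); lia.
Qed.
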